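(* Let $a>0$ and let $J$ be a kernel on $\mathbb{H}^1_L$ such that $J(e)\ge aL\log(j)L^{-2j}$ for every edge $e$ with $|e|=L^j$. Then for all $k\in\mathbb{N}$ there is a constant $C=C(k,J)$ such that for every $n\ge1$ and every $\gamma\in\{L^{-k},2L^{-k},\ldots,1-L^{-k},1\}$, \[\mathbb{P}_J(\Lambda_{n,n+k}\text{ is not connected})\le Cn^{-a/2}\quad\text{and}\quad\mathbb{P}_J(\Lambda_{n,n+k}\text{ has a cluster of density }\gamma)\le Cn^{-a(1-\gamma)}.\]
   Context: $\mathbb{H}^1_L$ ($L\ge2$ an integer) is the group $\bigoplus_{i=1}^\infty\mathbb{Z}/L\mathbb{Z}$ with ultrametric $\|x-y\|=L^{\max\{i:x_i\neq y_i\}}$ for $x\neq y$; $\Lambda_n(x)$ is the ball of radius $L^n$ around $x$ (an $n$-block). Edges are unordered pairs of distinct vertices with $|e|=\|x-y\|$; a kernel is any $J:E\to[0,\infty)$. $\mathbb{P}_J$: each edge open independently with probability $1-\exp(-J(e))$, giving configuration $\omega$. $\Lambda_{n,n+k}$ is the set of the $L^k$ $n$-blocks contained in $\Lambda_{n+k}(0)$, regarded as the vertex set of the random graph $\omega_{n,n+k}$ in which two distinct $n$-blocks are adjacent iff some open edge of $\omega$ has one endpoint in each. ''$\Lambda_{n,n+k}$ is not connected'' means $\omega_{n,n+k}$ is not connected; ''has a cluster of density $\gamma$'' means $\omega_{n,n+k}$ has a connected component consisting of exactly $\gamma L^k$ blocks. *)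

(* Defs.v *)
From HB Require Import structures.
From mathcomp Require Import all_boot all_order all_algebra.
From mathcomp Require Import all_classical all_reals all_analysis.
Set Implicit Arguments. Unset Strict Implicit. Unset Printing Implicit Defensive.
Import Order.TTheory GRing.Theory Num.Theory.
Local Open Scope ring_scope.

(* ---------- The hierarchical lattice H^1_L ----------
   A vertex is a finitely supported sequence x : nat -> nat with values in
   {0,..,L-1}; coordinates are indexed from 1 as in the paper (x 0 = 0 is a
   dummy coordinate). *)
Definition is_vertex (L : nat) (x : nat -> nat) : Prop :=
  x 0%N = 0%N /\ (forall i, (x i < L)%N) /\
  exists N : nat, forall i, (N <= i)%N -> x i = 0%N.

(* top_diff x y j  <->  j = max{i : x_i <> y_i}, i.e. ||x-y|| = L^j. *)
Definition top_diff (x y : nat -> nat) (j : nat) : Prop :=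
  x j <> y j /\ forall i, (j < i)%N -> x i = y i.

(* A kernel: a nonnegative function of unordered pairs of distinct vertices,
   encoded as a symmetric function of two vertices. *)
Definition is_kernel (R : realType) (L : nat) (J : (nat -> nat) -> (nat -> nat) -> R) : Prop :=
  forall x y, is_vertex L x -> is_vertex L y -> x <> y ->
    J x y = J y x /\ 0 <= J x y.

(* ---------- The block Lambda_m(0) ----------
   Lambda_m(0) = {x : x_i = 0 for i > m}, identified with functions
   'I_m -> 'I_L (finite-type coordinate t stands for paper coordinate t+1). *)
Definition pt (L m : nat) := {ffun 'I_m -> 'I_L}.

Definition emb (L m : nat) (f : pt L m) : nat -> nat :=
  fun i => match i with
           | 0%N => 0%N
           | i'.+1 => match insub i' with
                      | Some t => nat_of_ord (f t)
                      | None => 0%N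
                      end
           end.

(* Edges of Lambda_{m}(0): unordered pairs of distinct points, each represented
   once as an ordered pair (x, y) with rank x < rank y. *)
Definition edgesB (L m : nat) : {set pt L m * pt L m} :=
  [set p | enum_rank p.1 < enum_rank p.2]%N.

(* P_J restricted to the (finitely many) edges inside Lambda_m(0): the law of
   the open-edge set omega (a subset of edgesB), each edge e open
   independently with probability 1 - exp(-J e).  The events below only
   depend on these edges, so this is the exact P_J-probability. *)
Definition PrB (R : realType) (L m : nat) (J : (nat -> nat) -> (nat -> nat) -> R)
  (E : {set pt L m * pt L m} -> bool) : R :=
  \sum_(w : {set pt L m * pt L m} | (w \subset edgesB L m) && E w)
    \prod_(p in edgesB L m)
      (if p \in w then 1 - expR (- J (emb p.1) (emb p.2))
       else expR (- J (emb p.1) (emb p.2))).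

Definition is_open (L m : nat) (w : {set pt L m * pt L m}) (x y : pt L m) : bool :=
  ((x, y) \in w) || ((y, x) \in w).

(* ---------- n-blocks inside Lambda_{n+k}(0) ----------
   The n-block of x is determined by its coordinates n+1,...,n+k. *)
Definition blk (L n k : nat) (x : pt L (n + k)) : {ffun 'I_k -> 'I_L} :=
  [ffun t => x (rshift n t)].

Definition block_adj (L n k : nat) (w : {set pt L (n + k) * pt L (n + k)})
  (b c : {ffun 'I_k -> 'I_L}) : bool :=
  (b != c) && [exists x, exists y,
     [&& blk x == b, blk y == c & is_open w x y]].

Definition not_connected (L n k : nat) (w : {set pt L (n + k) * pt L (n + k)}) : bool :=
  ~~ [forall b, forall c, connect (block_adj w) b c].

Definition has_cluster_of_size (L n k s : nat) (w : {set pt L (n + k) * pt L (n + k)}) : bool :=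
  [exists b, #|[set c | connect (block_adj w) b c]| == s].

(* Main.v *)
Require Import Defs.
From HB Require Import structures.
From mathcomp Require Import all_boot all_order all_algebra.
From mathcomp Require Import all_classical all_reals all_analysis.
From mathcomp Require Import ring lra.
Set Implicit Arguments. Unset Strict Implicit. Unset Printing Implicit Defensive.
Import Order.TTheory GRing.Theory Num.Theory.
Local Open Scope ring_scope.

Definition lev (L k : nat) (b c : {ffun 'I_k -> 'I_L}) : nat :=
  (\max_(t : 'I_k | b t != c t) t.+1)%N.

Definition Wt (R : realType) (L k : nat) (b c : {ffun 'I_k -> 'I_L}) : R :=
  L%:R * (L%:R ^- (2 * lev b c)).

Definition bcut (R : realType) (L k : nat) (S : {set {ffun 'I_k -> 'I_L}}) : R :=
  \sum_(b in S) \sum_(c in ~: S) Wt R b c.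

Definition ins (L k : nat) (i0 : 'I_L) (b : {ffun 'I_k -> 'I_L}) : {ffun 'I_k.+1 -> 'I_L} :=
  [ffun t => if unlift ord_max t is Some t' then b t' else i0].

Definition trunc (L k : nat) (b : {ffun 'I_k.+1 -> 'I_L}) : {ffun 'I_k -> 'I_L} :=
  [ffun t => b (widen_ord (leqnSn k) t)].

Lemma widen_lift k (t : 'I_k) : widen_ord (leqnSn k) t = lift ord_max t.
Proof. by apply: val_inj; rewrite /= /bump leqNgt ltn_ord. Qed.

Lemma ins_widen L k i0 (b : {ffun 'I_k -> 'I_L}) t :
  ins i0 b (widen_ord (leqnSn k) t) = b t.
Proof. by rewrite ffunE widen_lift liftK. Qed.

Lemma ins_max L k i0 (b : {ffun 'I_k -> 'I_L}) : ins i0 b ord_max = i0.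
Proof. by rewrite ffunE unlift_none. Qed.

Lemma ins_trunc L k i0 (c : {ffun 'I_k.+1 -> 'I_L}) :
  c ord_max = i0 -> ins i0 (trunc c) = c.
Proof.
move=> Hc; apply/ffunP=> t; rewrite ffunE.
case: (unliftP ord_max t) => [t'|] -> //.
by rewrite ffunE widen_lift.
Qed.

Lemma ins_inj L k i0 : injective (@ins L k i0).
Proof.
move=> b c H; apply/ffunP=> t.
by rewrite -(ins_widen i0 b) -(ins_widen i0 c) H.
Qed.

Lemma lev_ins L k i0 (b c : {ffun 'I_k -> 'I_L}) :
  lev (ins i0 b) (ins i0 c) = lev b c.
Proof.
rewrite /lev big_mkcond big_ord_recr /= !ins_max eqxx /= maxn0.
rewrite [RHS]big_mkcond; apply: eq_bigr => t _.
by rewrite !ins_widen.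
Qed.

Lemma lev_top L k i0 (b : {ffun 'I_k -> 'I_L}) (c : {ffun 'I_k.+1 -> 'I_L}) :
  c ord_max != i0 -> lev (ins i0 b) c = k.+1.
Proof.
move=> Hc; apply/eqP; rewrite eqn_leq; apply/andP; split.
  by apply/bigmax_leqP => t _; exact: ltn_ord.
by apply: (leq_bigmax_cond ord_max); rewrite ins_max eq_sym.
Qed.

Lemma lev_sym L k (b c : {ffun 'I_k -> 'I_L}) : lev b c = lev c b.
Proof. by apply: eq_bigl => t; rewrite eq_sym. Qed.

Lemma Wt_ge0 (R : realType) L k (b c : {ffun 'I_k -> 'I_L}) : 0 <= Wt R b c.
Proof. by rewrite /Wt mulr_ge0 // invr_ge0 exprn_ge0. Qed.

Lemma sum_sub_le (R : realType) (T : finType) (A B : {pred T}) (f : T -> R) :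
  {subset A <= B} -> (forall x, x \in B -> 0 <= f x) ->
  \sum_(x in A) f x <= \sum_(x in B) f x.
Proof.
move=> AB f0; rewrite [X in X <= _]big_mkcond [X in _ <= X]big_mkcond /=.
apply: ler_sum => x _.
case: ifP => xA; first by rewrite (AB _ xA).
by case: ifP => // xB; exact: f0.
Qed.

Lemma cut_sym (R : realType) L k (S : {set {ffun 'I_k -> 'I_L}}) :
  bcut R S = bcut R (~: S).
Proof.
rewrite /bcut finset.setCK exchange_big /=; apply: eq_bigr => b _; apply: eq_bigr => c _.
by rewrite /Wt lev_sym.
Qed.

Lemma cut_ge (R : realType) L k (S : {set {ffun 'I_k -> 'I_L}}) :
  (1 < L)%N -> S != finset.set0 -> 1 - #|S|%:R / (L ^ k)%:R <= bcut R S.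
Proof.
move=> L1; elim: k S => [|k IH] S S0.
  rewrite expn0 divr1 (@le_trans _ _ 0) //.
    by rewrite subr_le0 ler1n card_gt0.
  by rewrite /bcut sumr_ge0 // => b _; rewrite sumr_ge0 // => c _; exact: Wt_ge0.
case/set0Pn: (S0) => b0 Hb0.
set i0 := b0 ord_max.
set S' := [set b' | ins i0 b' \in S].
have S'0 : S' != finset.set0 by apply/set0Pn; exists (trunc b0); rewrite inE ins_trunc.
have IH' := IH S' S'0.
set P := [set c : {ffun 'I_k.+1 -> 'I_L} | c ord_max == i0].
set T1 := ~: P :\: S.
set U := S :\: P.
set Wtop : R := L%:R * (L%:R ^- (2 * k.+1)).
have key : bcut R S' + (#|S'|%:R * (#|T1|%:R * Wtop)) <= bcut R S.
  rewrite /bcut.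
  apply: (@le_trans _ _ (\sum_(b' in S') \sum_(c in ~: S) Wt R (ins i0 b') c)).
    rewrite mulr_natl -sumr_const -big_split /=.
    apply: ler_sum => b' _.
    rewrite [X in _ <= X](bigID (fun c : {ffun 'I_k.+1 -> 'I_L} => c ord_max == i0)) /=.
    apply: lerD.
      rewrite (eq_bigr (fun c' => Wt R (ins i0 b') (ins i0 c'))); last first.
        by move=> c' _; rewrite /Wt lev_ins.
      rewrite -(big_imset (fun c => Wt R (ins i0 b') c) (in2W (@ins_inj L k i0))) /=.
      apply: (@le_trans _ _ (\sum_(c in [pred c | (c \in ~: S) && (c ord_max == i0)]) Wt R (ins i0 b') c)); last by [].
      apply: sum_sub_le; last by move=> *; exact: Wt_ge0.
      move=> c /imsetP [c' Hc' ->]; rewrite inE /= ins_max eqxx andbT.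
      by move: Hc'; rewrite !inE.
    rewrite le_eqVlt; apply/orP; left; apply/eqP.
    rewrite mulr_natl -sumr_const [X in _ = X](eq_bigr (fun _ => Wtop)); last first.
      by move=> c /andP [_ Hc]; rewrite /Wt lev_top.
    by apply: eq_bigl => c; rewrite /T1 !inE andbC.
  rewrite -(big_imset (fun b => \sum_(c in ~: S) Wt R b c) (in2W (@ins_inj L k i0))) /=.
  apply: sum_sub_le; last by move=> *; rewrite sumr_ge0 // => *; exact: Wt_ge0.
  by move=> b /imsetP [b' Hb' ->]; move: Hb'; rewrite inE.
have cS' : #|S'| = #|S :&: P|.
  rewrite -(card_imset _ (@ins_inj L k i0)); apply: eq_card => c.
  apply/imsetP/idP.
    by move=> [c' Hc' ->]; move: Hc'; rewrite !inE ins_max eqxx andbT.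
  rewrite !inE => /andP [HS HP]; exists (trunc c); last by rewrite ins_trunc //; apply/eqP.
  by rewrite inE ins_trunc //; apply/eqP.
have cP : #|P| = (L ^ k)%N.
  have -> : P = ins i0 @: [set: {ffun 'I_k -> 'I_L}].
    apply/setP => c; rewrite inE; apply/idP/imsetP.
      by move=> /eqP H; exists (trunc c); rewrite ?inE ?ins_trunc.
    by move=> [c' _ ->]; rewrite ins_max.
  by rewrite (card_imset _ (@ins_inj L k i0)) cardsT card_ffun !card_ord.
have e1 : #|S| = (#|S'| + #|U|)%N by rewrite cS' cardsID.
have e2 : (#|T1| + #|U| + L ^ k)%N = (L ^ k.+1)%N.
  have : (#|P| + #|~: P|)%N = (L ^ k.+1)%N by rewrite cardsC card_ffun !card_ord.
  rewrite cP addnC => <-; congr (_ + _)%N.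
  rewrite /T1 /U addnC -(cardsID S (~: P)); congr (_ + _)%N.
  by apply: eq_card => c; rewrite !inE andbC.
have e3 : (#|S'| <= L ^ k)%N by rewrite -cP cS' subset_leq_card // subsetIr.
have e4 : (0 < #|S'|)%N by rewrite card_gt0.
set s0 := #|S'| in e1 e3 e4 IH' key *.
set u := #|U| in e1 e2 *.
set X := #|T1| in e2 key *.
rewrite e1.
set l : R := L%:R.
set m : R := (L ^ k)%:R.
have l0 : 0 < l by rewrite ltr0n (ltn_trans _ L1).
have m0 : 0 < m by rewrite ltr0n expn_gt0 (ltn_trans _ L1).
have HW : Wtop = 1 / (l * m ^+ 2).
  have e : (2 * k.+1 = (k * 2).+2)%N by rewrite mulnC mulSn add2n.
  rewrite /Wtop /m natrX -/l -exprM e !exprS; field.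
  by rewrite expf_neq0 -/l gt_eqF.
have HL : (L ^ k.+1)%:R = l * m :> R by rewrite expnS natrM.
have HX : X%:R = l * m - m - u%:R :> R.
  have := congr1 (fun x => x%:R : R) e2; rewrite /= !natrD HL -/m => <-.
  by ring.
apply: le_trans key; apply: le_trans (lerD IH' (lexx _)).
rewrite HL HW HX natrD -subr_ge0.
have -> : 1 - s0%:R / m + s0%:R * ((l * m - m - u%:R) * (1 / (l * m ^+ 2))) -
  (1 - (s0%:R + u%:R) / (l * m)) = u%:R * (m - s0%:R) / (l * m ^+ 2).
  by field; rewrite -/m -/l !gt_eqF.
rewrite divr_ge0 //; last by rewrite mulr_ge0 ?exprn_ge0 ?ltW.
by rewrite mulr_ge0 // subr_ge0 /m ler_nat.
Qed.

Lemma prod_sum_disj (R : realType) (T : finType) (E F : {set T}) (q : T -> R) :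
  \sum_(w : {set T} | (w \subset E) && [disjoint w & F])
     \prod_(p in E) (if p \in w then 1 - q p else q p)
  = \prod_(p in E) (if p \in F then q p else 1).
Proof.
set Q := fun p : T => [pred b : bool | b ==> (p \notin F)].
have -> : \prod_(p in E) (if p \in F then q p else 1) =
    \prod_(p in E) \sum_(b : bool | b \in Q p) (if b then 1 - q p else q p).
  apply: eq_bigr => p _; rewrite big_mkcond big_bool /= inE /=.
  by case: (p \in F) => /=; rewrite ?add0r // subrK.
rewrite (big_distr_big_dep false).
pose h := fun f : {ffun T -> bool} => [set p | f p].
pose g := fun w : {set T} => [ffun p => p \in w].
have hg : cancel g h by move=> w; apply/setP => p; rewrite inE ffunE.
have gh : cancel h g by move=> f; apply/ffunP => p; rewrite ffunE inE.
rewrite (reindex h); last by exists g => x _; [exact: gh | exact: hg].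
apply: eq_big => f.
  apply/andP/pfamilyP.
    move=> [HE HF]; split.
            apply/fintype.subsetP => p; rewrite inE => Hp.
      by apply: (fintype.subsetP HE); rewrite inE; case: (f p) Hp.
    move=> p _; rewrite inE /=; apply/implyP => fp.
    by rewrite (disjointFr HF) // inE.
  move=> [HE HF]; split.
    apply/fintype.subsetP => p; rewrite inE => fp.
    by apply: (fintype.subsetP HE); rewrite inE fp.
  rewrite disjoint_subset; apply/fintype.subsetP => p; rewrite inE => fp.
  have pE : p \in E by apply: (fintype.subsetP HE); rewrite inE fp.
  by have := HF p pE; rewrite inE /= fp /= inE.
by move=> _; apply: eq_bigr => p _; rewrite inE.
Qed.

Definition catp (L n k : nat) (p : pt L n * {ffun 'I_k -> 'I_L}) : pt L (n + k) :=
  [ffun t => match fintype.split t with inl t1 => p.1 t1 | inr t2 => p.2 t2 end].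

Definition uncat (L n k : nat) (x : pt L (n + k)) : pt L n * {ffun 'I_k -> 'I_L} :=
  ([ffun t => x (lshift k t)], blk x).

Lemma blk_catp L n k (p : pt L n * {ffun 'I_k -> 'I_L}) : blk (catp p) = p.2.
Proof.
apply/ffunP => t; rewrite !ffunE.
by have := @unsplitK n k (inr t) => /= ->.
Qed.

Lemma catpK L n k : cancel (@catp L n k) (@uncat L n k).
Proof.
move=> [u b]; rewrite /uncat blk_catp; congr (_, _).
apply/ffunP => t; rewrite !ffunE.
by have := @unsplitK n k (inl t) => /= ->.
Qed.

Lemma uncatK L n k : cancel (@uncat L n k) (@catp L n k).
Proof.
move=> x; apply/ffunP => t; rewrite ffunE.
rewrite -{2}(splitK t); case: (fintype.split t) => [t1|t2] /=; by rewrite ffunE.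
Qed.

Lemma fiber_sum (R : realType) L n k (f : {ffun 'I_k -> 'I_L} -> R) :
  \sum_(x : pt L (n + k)) f (blk x) = (L ^ n)%:R * \sum_b f b.
Proof.
rewrite (reindex (@catp L n k)); last first.
  by apply: onW_bij; exists (@uncat L n k); [exact: catpK | exact: uncatK].
under eq_bigr do rewrite blk_catp.
rewrite -(pair_bigA _ (fun _ b => f b)) /= sumr_const card_ffun !card_ord.
by rewrite mulr_natl.
Qed.

Lemma emb_val L m (x : pt L m) (t : 'I_m) : emb x t.+1 = x t.
Proof. by rewrite /emb valK. Qed.

Lemma emb_big L m (x : pt L m) i : (m <= i)%N -> emb x i.+1 = 0%N.
Proof. by move=> H; rewrite /emb insubN // -leqNgt. Qed.

Lemma emb_vertex L m (x : pt L m) : (0 < L)%N -> is_vertex L (emb x).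
Proof.
move=> L0; split; first by [].
split.
  case=> [|i] //; case: (ltnP i m) => H.
    by have := emb_val x (Ordinal H) => /= ->.
  by rewrite emb_big.
by exists m.+1; case=> [|i] // H; rewrite emb_big.
Qed.

Lemma emb_inj L m : injective (@emb L m).
Proof.
move=> x y H; apply/ffunP => t; apply: val_inj.
by change (nat_of_ord (x t) = nat_of_ord (y t)); rewrite -(emb_val x) -(emb_val y) H.
Qed.

Lemma top_diff_blk L n k (x y : pt L (n + k)) :
  blk x != blk y -> top_diff (emb x) (emb y) (n + lev (blk x) (blk y)).
Proof.
move=> Hxy.
have [t0 Ht0 E] : {t0 | t0 \in [pred t | blk x t != blk y t] &
     lev (blk x) (blk y) = t0.+1}.
  apply: (@eq_bigmax_cond _ [pred t | blk x t != blk y t] (fun t : 'I_k => t.+1)).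
  apply/card_gt0P.
  case: (pickP [pred t | blk x t != blk y t]) => [t Ht|H]; first by exists t.
  by case/eqP: Hxy; apply/ffunP => t; have := H t => /= /negbFE /eqP.
rewrite E addnS; split.
  rewrite -[(n + t0)%N]/(nat_of_ord (rshift n t0)) !emb_val.
  move: Ht0; rewrite inE !ffunE /= => /eqP H1 H2; apply: H1; exact: val_inj.
case=> [|i] //; rewrite ltnS => Hi.
case: (ltnP i (n + k)) => Hik; last by rewrite !emb_big.
have Hni : (n <= i)%N by apply: leq_trans (ltnW Hi); rewrite leq_addr.
have Hk : (i - n < k)%N by rewrite ltn_subLR.
set t' : 'I_k := Ordinal Hk.
have -> : i = nat_of_ord (rshift n t') by rewrite /= subnKC.
rewrite !emb_val.
case: (eqVneq (blk x t') (blk y t')) => [H|H].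
  by move: H; rewrite !ffunE => ->.
have := @leq_bigmax_cond _ [pred t | blk x t != blk y t] (fun t : 'I_k => t.+1) t' H.
rewrite -/(lev (blk x) (blk y)) E ltnS /= leq_subLR => H2.
by move: Hi; rewrite ltnNge H2.
Qed.

Definition crossE (L n k : nat) (S : {set {ffun 'I_k -> 'I_L}}) :
  {set pt L (n + k) * pt L (n + k)} :=
  [set p in edgesB L (n + k) | (blk p.1 \in S) != (blk p.2 \in S)].

Lemma sum_sub_le' (R : realType) (T : finType) (A B : {pred T}) (f : T -> R) :
  {subset A <= B} -> (forall x, x \in B -> 0 <= f x) ->
  \sum_(x in A) f x <= \sum_(x in B) f x.
Proof.
move=> AB f0; rewrite [X in X <= _]big_mkcond [X in _ <= X]big_mkcond /=.
apply: ler_sum => x _.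
case: ifP => xA; first by rewrite (AB _ xA).
by case: ifP => // xB; exact: f0.
Qed.

Lemma edge_bound (R : realType) (L : nat) (a : R)
  (J : (nat -> nat) -> (nat -> nat) -> R) n k (S : {set {ffun 'I_k -> 'I_L}}) :
  (2 <= L)%N -> 0 < a -> is_kernel L J ->
  (forall x y j, is_vertex L x -> is_vertex L y -> top_diff x y j ->
     a * L%:R * ln (j%:R : R) * (L%:R ^- (2 * j)) <= J x y) ->
  (1 <= n)%N ->
  a * ln (n%:R : R) * bcut R S <=
    \sum_(p in crossE n S) J (emb p.1) (emb p.2).
Proof.
move=> L2 a0 HK HJ n1.
have L0 : (0 < L)%N by apply: ltnW.
have V x : is_vertex L (@emb L (n + k) x) by exact: emb_vertex.
have Jge0 (x y : pt L (n + k)) : x != y -> 0 <= J (emb x) (emb y).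
  move=> Hxy; have [_ ->] := HK _ _ (V x) (V y) (fun E => negP Hxy (introT eqP (emb_inj E))).
  by [].
have Jsym (x y : pt L (n + k)) : x != y -> J (emb y) (emb x) = J (emb x) (emb y).
  move=> Hxy; have [-> _] := HK _ _ (V x) (V y) (fun E => negP Hxy (introT eqP (emb_inj E))).
  by [].
pose D := [set p : pt L (n + k) * pt L (n + k) | (blk p.1 \in S) && (blk p.2 \notin S)].
pose phi := fun p : pt L (n + k) * pt L (n + k) =>
  if (enum_rank p.1 < enum_rank p.2)%N then p else (p.2, p.1).
have Dneq p : p \in D -> p.1 != p.2.
  rewrite inE => /andP [H1 H2]; apply/eqP => E; by rewrite -E H1 in H2.
have step1 : \sum_(p in D) J (emb p.1) (emb p.2) <=
             \sum_(p in crossE n S) J (emb p.1) (emb p.2).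
  rewrite (eq_bigr (fun p => J (emb (phi p).1) (emb (phi p).2))); last first.
    move=> p Hp; rewrite /phi; case: ifP => // _ /=.
    by rewrite Jsym // eq_sym Dneq.
  rewrite -(big_imset (fun q => J (emb q.1) (emb q.2)) (h := phi)); last first.
    move=> p q Hp Hq; rewrite /phi.
    move: Hp Hq; rewrite !inE => /andP [p1 p2] /andP [q1 q2].
    case: ifP; case: ifP => _ _ //.
    - by move=> E; move: p1; rewrite E /= (negbTE q2).
    - by move=> E; move: q1; rewrite -E /= (negbTE p2).
    - by case: p {p1 p2} => [x1 x2]; case: q {q1 q2} => [y1 y2] /= [-> ->].
  apply: sum_sub_le'.
    move=> q /imsetP [p Hp ->]; rewrite /crossE /phi !inE.
    have Hne := Dneq p Hp.
    move: Hp; rewrite inE => /andP [H1 H2].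
    case: ifP => Hr /=; first by rewrite Hr H1 (negbTE H2).
    rewrite H1 (negbTE H2) andbT.
    rewrite ltn_neqAle leqNgt Hr andbT.
    apply/negP => /eqP E; move/negP: Hne; apply; apply/eqP.
    by apply: enum_rank_inj; apply: val_inj.
  move=> q; rewrite /crossE !inE => /andP [Hq _]; apply: Jge0.
  by apply/negP => /eqP E; move: Hq; rewrite E ltnn.
apply: le_trans step1.
set c := a * ln (n%:R : R) * L%:R ^- (2 * n).
have step2 : \sum_(p in D) c * Wt R (blk p.1) (blk p.2) <=
             \sum_(p in D) J (emb p.1) (emb p.2).
  apply: ler_sum => p Hp.
  have Hb : blk p.1 != blk p.2.
    move: Hp; rewrite inE => /andP [H1 H2]; apply/eqP => E; by rewrite -E H1 in H2.
  apply: (le_trans _ (HJ _ _ _ (V p.1) (V p.2) (top_diff_blk Hb))).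
  rewrite /c /Wt mulnDr exprD invfM.
  set l := L%:R; set u := l ^+ (2 * n); set v := l ^+ (2 * lev (blk p.1) (blk p.2)).
  have -> : a * ln (n%:R : R) * u^-1 * (l * v^-1) = (a * l * (u^-1 * v^-1)) * ln (n%:R : R)
    by ring.
  have -> : a * l * ln ((n + lev (blk p.1) (blk p.2))%:R) * (u^-1 * v^-1) =
            (a * l * (u^-1 * v^-1)) * ln ((n + lev (blk p.1) (blk p.2))%:R : R) by ring.
  apply: ler_wpM2l.
    apply: mulr_ge0; [apply: mulr_ge0; [exact: ltW | exact: ler0n] | by apply: mulr_ge0; rewrite invr_ge0 exprn_ge0 // ler0n].
  by rewrite ler_ln ?posrE ?ltr0n ?ler_nat ?leq_addr // (leq_trans n1) // leq_addr.
apply: le_trans step2.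
have step3 : \sum_(p in D) Wt R (blk p.1) (blk p.2) =
             ((L ^ n)%:R * (L ^ n)%:R) * bcut R S.
  pose F := fun x y : pt L (n + k) =>
    if (blk x \in S) && (blk y \notin S) then Wt R (blk x) (blk y) else 0.
  transitivity (\sum_x \sum_y F x y).
    by rewrite pair_bigA big_mkcond /=; apply: eq_bigr => p _; rewrite inE.
  pose G := fun b c : {ffun 'I_k -> 'I_L} =>
    if (b \in S) && (c \notin S) then Wt R b c else 0.
  transitivity (\sum_(x : pt L (n + k)) (L ^ n)%:R * \sum_c G (blk x) c).
    by apply: eq_bigr => x _; rewrite -fiber_sum.
  rewrite -mulr_sumr (@fiber_sum R L n k (fun b => \sum_c G b c)) mulrA.
  congr (_ * _); rewrite /bcut [RHS]big_mkcond; apply: eq_bigr => b _.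
  case: ifP => Hb.
    by rewrite [RHS]big_mkcond; apply: eq_bigr => c0 _; rewrite /G Hb inE.
  by rewrite big1 // => c0 _; rewrite /G Hb.
rewrite -mulr_sumr step3 mulrA; apply: ler_wpM2r.
  by rewrite /bcut sumr_ge0 // => b _; rewrite sumr_ge0 // => c0 _; exact: Wt_ge0.
rewrite /c -!natrX -natrM -expnD addnn -mul2n natrX.
by rewrite mulfVK // expf_neq0 // pnatr_eq0 -lt0n.
Qed.

Lemma union_bound (R : realType) (W I : finType) (P E : pred W) (Q : pred I)
  (D : I -> pred W) (t : W -> R) :
  (forall w, P w -> 0 <= t w) ->
  (forall w, P w -> E w -> exists2 i, Q i & D i w) ->
  \sum_(w | P w && E w) t w <= \sum_(i | Q i) \sum_(w | P w && D i w) t w.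
Proof.
move=> t0 H.
apply: (@le_trans _ _ (\sum_(w | P w) \sum_(i | Q i && D i w) t w)).
  rewrite big_mkcond [X in _ <= X]big_mkcond /=; apply: ler_sum => w _.
  case Pw: (P w) => //=; case Ew: (E w) => /=.
    have [i Qi Di] := H w Pw Ew.
    rewrite (bigD1 i) /= ?Qi ?Di // lerDl sumr_ge0 // => j _; exact: t0.
  by rewrite sumr_ge0 // => j _; exact: t0.
rewrite (exchange_big_dep Q) /=; last by move=> w i _ /andP [].
rewrite le_eqVlt; apply/orP; left; apply/eqP; apply: eq_bigr => i Qi; apply: eq_bigl => w.
by rewrite Qi.
Qed.

Lemma sum_const_le (R : realType) (I : finType) (P : pred I) (x : R) :
  0 <= x -> \sum_(i | P i) x <= #|I|%:R * x.
Proof.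
move=> x0; apply: (@le_trans _ _ (\sum_(i : I) x)).
  rewrite [X in X <= _]big_mkcond; apply: ler_sum => i _; by case: ifP.
by rewrite sumr_const mulr_natl.
Qed.

Lemma PrB_disj (R : realType) L m (J : (nat -> nat) -> (nat -> nat) -> R)
  (F : {set pt L m * pt L m}) : F \subset edgesB L m ->
  PrB J (fun w => [disjoint w & F]) = expR (- \sum_(p in F) J (emb p.1) (emb p.2)).
Proof.
move=> FE; rewrite /PrB.
rewrite (prod_sum_disj (edgesB L m) F (fun p => expR (- J (emb p.1) (emb p.2)))).
rewrite -sumrN expR_sum [RHS]big_mkcond [LHS]big_mkcond; apply: eq_bigr => p _.
case: (boolP (p \in F)) => pF; first by rewrite (fintype.subsetP FE _ pF).
by case: (p \in edgesB L m).
Qed.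

Lemma comp_disj L n k (w : {set pt L (n + k) * pt L (n + k)}) b :
  [disjoint w & crossE n [set c | connect (block_adj w) b c]].
Proof.
rewrite disjoint_subset; apply/fintype.subsetP => -[x y] pw.
rewrite inE /crossE !inE /=; apply/negP => /andP [_].
suff -> : connect (block_adj w) b (blk x) = connect (block_adj w) b (blk y) by rewrite eqxx.
case: (eqVneq (blk x) (blk y)) => [-> //|Hne].
have adj1 : block_adj w (blk x) (blk y).
  rewrite /block_adj Hne; apply/existsP; exists x; apply/existsP; exists y.
  by rewrite !eqxx /is_open pw.
have adj2 : block_adj w (blk y) (blk x).
  rewrite /block_adj eq_sym Hne; apply/existsP; exists y; apply/existsP; exists x.
  by rewrite !eqxx /is_open pw orbT.
apply/idP/idP => H.
  exact: connect_trans H (connect1 adj1).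
exact: connect_trans H (connect1 adj2).
Qed.

Lemma per_S (R : realType) (L : nat) (a : R)
  (J : (nat -> nat) -> (nat -> nat) -> R) n k (S : {set {ffun 'I_k -> 'I_L}}) (be : R) :
  (2 <= L)%N -> 0 < a -> is_kernel L J ->
  (forall x y j, is_vertex L x -> is_vertex L y -> top_diff x y j ->
     a * L%:R * ln (j%:R : R) * (L%:R ^- (2 * j)) <= J x y) ->
  (1 <= n)%N -> be <= bcut R S ->
  PrB J (fun w => [disjoint w & crossE n S]) <= n%:R `^ (- (a * be)).
Proof.
move=> L2 a0 HK HJ n1 Hbe.
rewrite PrB_disj; last first.
  by apply/fintype.subsetP => p; rewrite /crossE inE => /andP [].
have EB := edge_bound S L2 a0 HK HJ n1.
rewrite /powR ifF; last by rewrite pnatr_eq0; apply/negP => /eqP E; rewrite E in n1.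
rewrite ler_expR.
apply: (@le_trans _ _ (- (a * ln (n%:R : R) * bcut R S))); first by rewrite lerN2.
rewrite mulNr lerN2.
have -> : a * be * ln (n%:R : R) = (a * ln (n%:R : R)) * be by ring.
apply: ler_wpM2l => //.
by apply: mulr_ge0; [exact: ltW | apply: ln_ge0; rewrite ler1n].
Qed.

Theorem lemma5p3 (R : realType) (L : nat) (a : R)
  (J : (nat -> nat) -> (nat -> nat) -> R) :
  (2 <= L)%N -> 0 < a -> is_kernel L J ->
  (forall x y j, is_vertex L x -> is_vertex L y -> top_diff x y j ->
     a * L%:R * ln (j%:R : R) * (L%:R ^- (2 * j)) <= J x y) ->
  forall k : nat, exists C : R, forall n : nat, (1 <= n)%N ->
    PrB J (@not_connected L n k) <= C * (n%:R `^ (- (a / 2))) /\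
    (forall i : nat, (1 <= i <= L ^ k)%N ->
       PrB J (@has_cluster_of_size L n k i)
         <= C * (n%:R `^ (- (a * (1 - i%:R / (L ^ k)%:R))))).
Proof.
move=> L2 a0 HK HJ k.
exists (#|{set {ffun 'I_k -> 'I_L}}|%:R) => n n1.
have L1 : (1 < L)%N by [].
have t0 : forall w : {set pt L (n + k) * pt L (n + k)}, w \subset edgesB L (n + k) ->
    0 <= \prod_(p in edgesB L (n + k))
      (if p \in w then 1 - expR (- J (emb p.1) (emb p.2))
       else expR (- J (emb p.1) (emb p.2))).
  move=> w _; apply: prodr_ge0 => p pE.
  case: ifP => _; last exact: expR_ge0.
  rewrite subr_ge0 -expR0 ler_expR oppr_le0.
  have L0 : (0 < L)%N by apply: ltnW.
  have Hne : emb p.1 <> emb p.2.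
    move/emb_inj => E; move: pE; rewrite inE E ltnn //.
  by have [_ ->] := HK _ _ (emb_vertex p.1 L0) (emb_vertex p.2 L0) Hne.
split.
  apply: (@le_trans _ _ (\sum_(S : {set {ffun 'I_k -> 'I_L}} | (S != finset.set0) && (~: S != finset.set0))
            PrB J (fun w => [disjoint w & crossE n S]))).
    rewrite /PrB.
    refine (@union_bound R _ _ (fun w : {set pt L (n + k) * pt L (n + k)} => w \subset edgesB L (n + k)) (@not_connected L n k) _ (fun S w => [disjoint w & crossE n S]) _ _ _).
      exact: t0.
    move=> w _; rewrite /not_connected => /forallPn [b /forallPn [c Hbc]].
    exists [set c | connect (block_adj w) b c]; last exact: comp_disj.
    apply/andP; split; apply/set0Pn.
      by exists b; rewrite inE connect0.
    by exists c; rewrite !inE.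
  apply: (le_trans _ (sum_const_le _ (powR_ge0 _ _))).
  apply: ler_sum => S /andP [S0 SC0].
  apply: per_S => //.
  have h1 := cut_ge R L1 S0.
  have h2 := cut_ge R L1 SC0; rewrite -cut_sym in h2.
  have cS : (#|S| + #|~: S| = L ^ k)%N by rewrite cardsC card_ffun !card_ord.
  have N0 : (0 < (L ^ k)%:R :> R) by rewrite ltr0n expn_gt0 ltnW.
  have e : #|S|%:R / (L ^ k)%:R + #|~: S|%:R / (L ^ k)%:R = 1 :> R.
    by rewrite -mulrDl -natrD cS divff // gt_eqF.
  lra.
move=> i /andP [i1 iN].
apply: (@le_trans _ _ (\sum_(S : {set {ffun 'I_k -> 'I_L}} | #|S| == i)
          PrB J (fun w => [disjoint w & crossE n S]))).
  rewrite /PrB.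
  refine (@union_bound R _ _ (fun w : {set pt L (n + k) * pt L (n + k)} => w \subset edgesB L (n + k)) (@has_cluster_of_size L n k i) _ (fun S w => [disjoint w & crossE n S]) _ _ _).
    exact: t0.
  move=> w _; rewrite /has_cluster_of_size => /existsP [b Hb].
  by exists [set c | connect (block_adj w) b c]; last exact: comp_disj.
apply: (le_trans _ (sum_const_le _ (powR_ge0 _ _))).
apply: ler_sum => S /eqP HS.
apply: per_S => //.
have S0 : S != finset.set0 by rewrite -card_gt0 HS.
by have := cut_ge R L1 S0; rewrite HS.
Qed.
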